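(* For any convex quadrilateral $\Delta\subset\mathbb R^2$ there is a unique pair $(\alpha,\beta)$ with $0\le\beta<1\le\alpha$ and $\alpha-\beta\ge1$ such that $\Delta$ is affinely equivalent to the convex hull of $(0,0),(1,0),(\alpha,1-\beta),(0,1)$. If $\Delta$ has no pair of parallel edges, then $\beta>0$ and $\alpha>1$, and $\Delta$ is affinely equivalent to the orthotoric quadrilateral $\sigma([1,\alpha]\times[0,\beta])$, where $\sigma(x,y)=(x+y,xy)$.
   Context: The pair $(\alpha,\beta)$ is called the characteristic pair of $\Delta$. *)

(* Defs.v *)
From Stdlib Require Import Reals.
Open Scope R_scope.

Definition pt := (R * R)%type.

Definition orient (a b c : pt) : R :=
  (fst b - fst a) * (snd c - snd a) - (snd b - snd a) * (fst c - fst a).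

Definition cross_dir (a b c d : pt) : R :=
  (fst b - fst a) * (snd d - snd c) - (snd b - snd a) * (fst d - fst c).

Definition conv4 (p0 p1 p2 p3 : pt) (x : pt) : Prop :=
  exists l0 l1 l2 l3 : R,
    0 <= l0 /\ 0 <= l1 /\ 0 <= l2 /\ 0 <= l3 /\ l0 + l1 + l2 + l3 = 1 /\
    fst x = l0 * fst p0 + l1 * fst p1 + l2 * fst p2 + l3 * fst p3 /\
    snd x = l0 * snd p0 + l1 * snd p1 + l2 * snd p2 + l3 * snd p3.

Definition vtx (v : nat -> pt) (i : nat) : pt := v (i mod 4)%nat.

Definition convex_quad (v : nat -> pt) : Prop :=
  (forall i : nat, (i < 4)%nat -> 0 < orient (vtx v i) (vtx v (i + 1)) (vtx v (i + 2))) \/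
  (forall i : nat, (i < 4)%nat -> orient (vtx v i) (vtx v (i + 1)) (vtx v (i + 2)) < 0).

Definition quad (v : nat -> pt) : pt -> Prop :=
  conv4 (vtx v 0) (vtx v 1) (vtx v 2) (vtx v 3).

Definition has_parallel_edges (v : nat -> pt) : Prop :=
  exists i j : nat, (i < 4)%nat /\ (j < 4)%nat /\ i <> j /\
    cross_dir (vtx v i) (vtx v (i + 1)) (vtx v j) (vtx v (j + 1)) = 0.

Definition aff_map (a b c d e f : R) (x : pt) : pt :=
  (a * fst x + b * snd x + e, c * fst x + d * snd x + f).

Definition aff_equiv (S T : pt -> Prop) : Prop :=
  exists a b c d e f : R, a * d - b * c <> 0 /\
    (forall x : pt, T x <-> exists y : pt, S y /\ x = aff_map a b c d e f y).

Definition char_quad (al be : R) : pt -> Prop :=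
  conv4 (0, 0) (1, 0) (al, 1 - be) (0, 1).

Definition char_pair_ok (al be : R) : Prop :=
  0 <= be /\ be < 1 /\ 1 <= al /\ al - be >= 1.

Definition sigma (x : pt) : pt := (fst x + snd x, fst x * snd x).

Definition orthotoric (al be : R) (z : pt) : Prop :=
  exists x y : R, 1 <= x <= al /\ 0 <= y <= be /\ z = sigma (x, y).

(* Main.v *)
Require Import Defs.
From Stdlib Require Import Reals Lra Psatz Lia.
Open Scope R_scope.


Lemma conv4_intro p0 p1 p2 p3 x l0 l1 l2 l3 :
  0 <= l0 -> 0 <= l1 -> 0 <= l2 -> 0 <= l3 -> l0 + l1 + l2 + l3 = 1 ->
  fst x = l0 * fst p0 + l1 * fst p1 + l2 * fst p2 + l3 * fst p3 ->
  snd x = l0 * snd p0 + l1 * snd p1 + l2 * snd p2 + l3 * snd p3 ->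
  conv4 p0 p1 p2 p3 x.
Proof. intros; exists l0, l1, l2, l3; tauto. Qed.

Lemma conv4_rot p0 p1 p2 p3 x : conv4 p0 p1 p2 p3 x <-> conv4 p1 p2 p3 p0 x.
Proof.
  split; intros (l0&l1&l2&l3&H0&H1&H2&H3&Hs&Hx&Hy).
  - apply (conv4_intro _ _ _ _ _ l1 l2 l3 l0); lra.
  - apply (conv4_intro _ _ _ _ _ l3 l0 l1 l2); lra.
Qed.

Lemma conv4_refl p0 p1 p2 p3 x : conv4 p0 p1 p2 p3 x <-> conv4 p0 p3 p2 p1 x.
Proof.
  split; intros (l0&l1&l2&l3&H0&H1&H2&H3&Hs&Hx&Hy).
  - apply (conv4_intro _ _ _ _ _ l0 l3 l2 l1); lra.
  - apply (conv4_intro _ _ _ _ _ l0 l3 l2 l1); lra.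
Qed.

Lemma conv4_aff a b c d e f p0 p1 p2 p3 q0 q1 q2 q3 x :
  q0 = aff_map a b c d e f p0 -> q1 = aff_map a b c d e f p1 ->
  q2 = aff_map a b c d e f p2 -> q3 = aff_map a b c d e f p3 ->
  (conv4 q0 q1 q2 q3 x <-> exists y, conv4 p0 p1 p2 p3 y /\ x = aff_map a b c d e f y).
Proof.
  intros -> -> -> ->. split.
  - intros (l0&l1&l2&l3&H0&H1&H2&H3&Hs&Hx&Hy).
    exists (l0 * fst p0 + l1 * fst p1 + l2 * fst p2 + l3 * fst p3,
            l0 * snd p0 + l1 * snd p1 + l2 * snd p2 + l3 * snd p3).
    split.
    + apply (conv4_intro _ _ _ _ _ l0 l1 l2 l3); simpl; lra.
    + destruct x as [x1 x2]; unfold aff_map in *; simpl in *.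
      replace l0 with (1 - l1 - l2 - l3) in * by lra.
      rewrite Hx, Hy; f_equal; ring.
  - intros (y & (l0&l1&l2&l3&H0&H1&H2&H3&Hs&Hx&Hy) & ->).
    apply (conv4_intro _ _ _ _ _ l0 l1 l2 l3); auto; unfold aff_map; simpl;
    rewrite Hx, Hy; replace l0 with (1 - l1 - l2 - l3) by lra; ring.
Qed.

Lemma aff_equiv_ext (S S' T : pt -> Prop) :
  (forall x, S x <-> S' x) -> aff_equiv S' T -> aff_equiv S T.
Proof.
  intros HS (a&b&c&d&e&f&Hd&H). exists a,b,c,d,e,f; split; auto.
  intro x; rewrite H; split; intros (y&Hy&->); exists y; split; auto; apply HS; auto.
Qed.

Lemma aff_equiv_ext2 (S T T' : pt -> Prop) :
  (forall x, T x <-> T' x) -> aff_equiv S T' -> aff_equiv S T.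
Proof.
  intros HT (a&b&c&d&e&f&Hd&H). exists a,b,c,d,e,f; split; auto.
  intro x; rewrite HT; apply H.
Qed.

Lemma aff_equiv_trans S T U : aff_equiv S T -> aff_equiv T U -> aff_equiv S U.
Proof.
  intros (a&b&c&d&e&f&Hd&H) (a'&b'&c'&d'&e'&f'&Hd'&H').
  exists (a'*a + b'*c), (a'*b + b'*d), (c'*a + d'*c), (c'*b + d'*d),
         (a'*e + b'*f + e'), (c'*e + d'*f + f').
  split.
  - replace ((a'*a + b'*c) * (c'*b + d'*d) - (a'*b + b'*d) * (c'*a + d'*c))
      with ((a'*d' - b'*c') * (a*d - b*c)) by ring.
    apply Rmult_integral_contrapositive; auto.
  - intro x; rewrite H'; split.
    + intros (y & Hy & ->). apply H in Hy as (z & Hz & ->).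
      exists z; split; auto. unfold aff_map; simpl; f_equal; ring.
    + intros (z & Hz & ->). exists (aff_map a b c d e f z); split.
      * apply H; exists z; auto.
      * unfold aff_map; simpl; f_equal; ring.
Qed.

Lemma lin_inj a b c d u w : a*d - b*c <> 0 -> a*u + b*w = 0 -> c*u + d*w = 0 -> u = 0 /\ w = 0.
Proof.
  intros Hd H1 H2.
  assert (E1: (a*d-b*c)*u = d*(a*u+b*w) - b*(c*u+d*w)) by ring.
  assert (E2: (a*d-b*c)*w = a*(c*u+d*w) - c*(a*u+b*w)) by ring.
  rewrite H1, H2 in E1, E2.
  assert (F1: (a*d-b*c)*u = 0) by lra. assert (F2: (a*d-b*c)*w = 0) by lra.
  apply Rmult_integral in F1; apply Rmult_integral in F2. tauto.
Qed.

Lemma aff_inj a b c d e f x y : a*d - b*c <> 0 ->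
  aff_map a b c d e f x = aff_map a b c d e f y -> x = y.
Proof.
  intros Hd H. destruct x as [x1 x2], y as [y1 y2]; unfold aff_map in H; simpl in H.
  injection H; intros H2 H1.
  destruct (lin_inj a b c d (x1 - y1) (x2 - y2)) as [E1 E2]; auto; try lra.
  f_equal; lra.
Qed.

Lemma aff_equiv_sym S T : aff_equiv S T -> aff_equiv T S.
Proof.
  intros (a&b&c&d&e&f&Hd&H).
  set (D := a*d - b*c).
  exists (d/D), (-b/D), (-c/D), (a/D), (-(d/D*e) - (-b/D)*f), (-(-c/D*e) - (a/D)*f).
  split.
  - replace (d / D * (a / D) - - b / D * (- c / D)) with (1/D) by (unfold D; field; auto).
    intro Hc. assert (E: D * (1/D) = 1) by (unfold D; field; auto).
    rewrite Hc in E. lra.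
  - intro x; split.
    + intro Hx. exists (aff_map a b c d e f x); split.
      * apply H; exists x; auto.
      * destruct x; unfold aff_map; simpl; f_equal; unfold D; field; auto.
    + intros (y & Hy & ->). apply H in Hy as (z & Hz & ->).
      replace (aff_map (d / D) (- b / D) (- c / D) (a / D) (- (d / D * e) - - b / D * f)
                 (- (- c / D * e) - a / D * f) (aff_map a b c d e f z)) with z; auto.
      destruct z; unfold aff_map; simpl; f_equal; unfold D; field; auto.
Qed.

Lemma norm_equiv p0 p1 p2 p3 : orient p0 p1 p3 <> 0 ->
  aff_equiv (conv4 p0 p1 p2 p3)
    (conv4 (0,0) (1,0) (orient p0 p2 p3 / orient p0 p1 p3, orient p0 p1 p2 / orient p0 p1 p3) (0,1)).
Proof.
  intro HD.
  destruct p0 as [x0 y0], p1 as [x1 y1], p2 as [x2 y2], p3 as [x3 y3].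
  unfold orient in *; simpl in *.
  set (D := (x1 - x0) * (y3 - y0) - (y1 - y0) * (x3 - x0)) in *.
  set (a := (y3 - y0)/D). set (b := -(x3-x0)/D). set (c := -(y1-y0)/D). set (d := (x1-x0)/D).
  exists a, b, c, d, (-(a*x0 + b*y0)), (-(c*x0+d*y0)).
  split.
  - replace (a*d - b*c) with (1/D) by (unfold a,b,c,d,D in *; field; auto).
    intro Hc. assert (E: D * (1/D) = 1) by (field; auto). rewrite Hc in E. lra.
  - intro x. apply conv4_aff; unfold aff_map; simpl; f_equal;
      unfold a,b,c,d,D in *; field; auto.
Qed.

Lemma key p0 p1 p2 p3 :
  (0 < orient p3 p0 p1 /\ 0 < orient p0 p1 p2 /\ orient p0 p1 p2 <= orient p3 p0 p1 /\
     orient p3 p0 p1 <= orient p1 p2 p3) \/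
  (orient p3 p0 p1 < 0 /\ orient p0 p1 p2 < 0 /\ orient p3 p0 p1 <= orient p0 p1 p2 /\
     orient p1 p2 p3 <= orient p3 p0 p1) ->
  exists al be, char_pair_ok al be /\ aff_equiv (conv4 p0 p1 p2 p3) (char_quad al be) /\
    (be = 0 -> cross_dir p0 p1 p2 p3 = 0) /\ (al = 1 -> cross_dir p1 p2 p3 p0 = 0).
Proof.
  intro H.
  assert (E0: orient p0 p1 p3 = orient p3 p0 p1) by (unfold orient; ring).
  assert (E3: orient p0 p2 p3 = orient p3 p0 p1 + orient p1 p2 p3 - orient p0 p1 p2)
    by (unfold orient; ring).
  assert (C1: cross_dir p0 p1 p2 p3 = orient p3 p0 p1 - orient p0 p1 p2)
    by (unfold orient, cross_dir; ring).
  assert (C2: cross_dir p1 p2 p3 p0 = orient p3 p0 p1 - orient p0 p2 p3)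
    by (unfold orient, cross_dir; ring).
  set (A0 := orient p3 p0 p1) in *. set (A1 := orient p0 p1 p2) in *.
  set (A2 := orient p1 p2 p3) in *.
  assert (HA0 : A0 <> 0) by lra.
  set (r := A1 / A0). set (q := A2 / A0).
  assert (Hr : r * A0 = A1) by (unfold r; field; auto).
  assert (Hq : q * A0 = A2) by (unfold q; field; auto).
  assert (Hr1: 0 < r <= 1 /\ 1 <= q) by (destruct H; repeat split; nra).
  exists (1 + q - r), (1 - r). split; [unfold char_pair_ok; lra|]. split; [|split].
  - apply (aff_equiv_ext2 _ _ _ (fun x => iff_refl _)).
    unfold char_quad.
    replace (1 + q - r, 1 - (1 - r)) with
      (orient p0 p2 p3 / orient p0 p1 p3, orient p0 p1 p2 / orient p0 p1 p3).
    + apply norm_equiv. rewrite E0; auto.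
    + rewrite E0, E3. f_equal; unfold r, q, A1; field; auto.
  - intro Hb. rewrite C1. nra.
  - intro Ha. rewrite C2, E3. nra.
Qed.

Definition ext (S : pt -> Prop) (x : pt) : Prop :=
  S x /\ forall y z, S y -> S z -> fst x = (fst y + fst z)/2 -> snd x = (snd y + snd z)/2 -> y = z.

Lemma ext_ext S S' x : (forall x, S x <-> S' x) -> ext S x -> ext S' x.
Proof.
  intros HS [H1 H2]; split; [apply HS; auto|].
  intros y z Hy Hz; apply H2; apply HS; auto.
Qed.

Lemma ext_img a b c d e f (S T : pt -> Prop) x : a*d - b*c <> 0 ->
  (forall x, T x <-> exists y, S y /\ x = aff_map a b c d e f y) ->
  ext S x -> ext T (aff_map a b c d e f x).
Proof.
  intros Hd HT [Hx Hm]. split; [apply HT; exists x; auto|].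
  intros y' z' Hy Hz E1 E2.
  apply HT in Hy as (y & Hy & ->). apply HT in Hz as (z & Hz & ->).
  f_equal. apply Hm; auto;
  destruct x as [x1 x2], y as [y1 y2], z as [z1 z2]; unfold aff_map in *; simpl in *;
  destruct (lin_inj a b c d (x1 - (y1+z1)/2) (x2 - (y2+z2)/2)) as [F1 F2]; auto; lra.
Qed.

Lemma ext0 (S : pt -> Prop) p0 p1 p2 p3 x l0 l1 l2 l3 :
  (forall x, S x <-> conv4 p0 p1 p2 p3 x) -> ext S x ->
  0 < l0 -> 0 <= l1 -> 0 <= l2 -> 0 <= l3 -> l0 + l1 + l2 + l3 = 1 ->
  fst x = l0 * fst p0 + l1 * fst p1 + l2 * fst p2 + l3 * fst p3 ->
  snd x = l0 * snd p0 + l1 * snd p1 + l2 * snd p2 + l3 * snd p3 ->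
  x = p0.
Proof.
  intros HS [_ Hm] H0 H1 H2 H3 Hs Hx Hy.
  set (m := l1 + l2 + l3). set (t := Rmin 1 l0).
  assert (Ht: 0 < t /\ t <= 1 /\ t <= l0).
  { unfold t; split; [apply Rmin_glb_lt; lra|split; [apply Rmin_l|apply Rmin_r]]. }
  assert (Htm: t * m <= l0) by (unfold m; nra).
  set (y := ((l0 + t*m) * fst p0 + (l1*(1-t)) * fst p1 + (l2*(1-t)) * fst p2 + (l3*(1-t)) * fst p3,
             (l0 + t*m) * snd p0 + (l1*(1-t)) * snd p1 + (l2*(1-t)) * snd p2 + (l3*(1-t)) * snd p3)).
  set (z := ((l0 - t*m) * fst p0 + (l1*(1+t)) * fst p1 + (l2*(1+t)) * fst p2 + (l3*(1+t)) * fst p3,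
             (l0 - t*m) * snd p0 + (l1*(1+t)) * snd p1 + (l2*(1+t)) * snd p2 + (l3*(1+t)) * snd p3)).
  assert (E : y = z).
  { apply Hm; try apply HS.
    - apply (conv4_intro _ _ _ _ _ (l0 + t*m) (l1*(1-t)) (l2*(1-t)) (l3*(1-t))); unfold y, m in *; simpl;
        try nra; try ring.
    - apply (conv4_intro _ _ _ _ _ (l0 - t*m) (l1*(1+t)) (l2*(1+t)) (l3*(1+t))); unfold z, m in *; simpl;
        try nra; try ring.
    - unfold y, z, m; simpl; rewrite Hx; field.
    - unfold y, z, m; simpl; rewrite Hy; field. }
  unfold y, z in E. injection E; intros E2 E1.
  assert (F1: t * (m * fst p0 - (l1 * fst p1 + l2 * fst p2 + l3 * fst p3)) = 0) by (clear -E1; unfold m in *; lra).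
  assert (F2: t * (m * snd p0 - (l1 * snd p1 + l2 * snd p2 + l3 * snd p3)) = 0) by (clear -E2; unfold m in *; lra).
  apply Rmult_integral in F1; apply Rmult_integral in F2.
  destruct F1 as [F1|F1]; [lra|]. destruct F2 as [F2|F2]; [lra|].
  destruct x as [x1 x2], p0 as [a1 a2]; simpl in *; f_equal; unfold m in *; nra.
Qed.

Lemma ext_conv4 p0 p1 p2 p3 x : ext (conv4 p0 p1 p2 p3) x ->
  x = p0 \/ x = p1 \/ x = p2 \/ x = p3.
Proof.
  intro He. destruct (proj1 He) as (l0&l1&l2&l3&H0&H1&H2&H3&Hs&Hx&Hy).
  destruct (Rlt_or_le 0 l0) as [L0|L0].
  { left. eapply (ext0 _ p0 p1 p2 p3 x l0 l1 l2 l3); eauto; tauto. }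
  destruct (Rlt_or_le 0 l1) as [L1|L1].
  { right; left. eapply (ext0 _ p1 p2 p3 p0 x l1 l2 l3 l0); eauto; try lra.
    intro; apply conv4_rot. }
  destruct (Rlt_or_le 0 l2) as [L2|L2].
  { right; right; left. eapply (ext0 _ p2 p3 p0 p1 x l2 l3 l0 l1); eauto; try lra.
    intro; rewrite conv4_rot; apply conv4_rot. }
  right; right; right. eapply (ext0 _ p3 p0 p1 p2 x l3 l0 l1 l2); eauto; try lra.
  intro; rewrite conv4_rot, conv4_rot; apply conv4_rot.
Qed.

Ltac ext_tac l0 l1 l2 l3 :=
  split; [apply (conv4_intro _ _ _ _ _ l0 l1 l2 l3); simpl; lra|];
  intros [y1 y2] [z1 z2] (a0&a1&a2&a3&A0&A1&A2&A3&As&Ax&Ay)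
    (b0&b1&b2&b3&B0&B1&B2&B3&Bs&Bx&By) M1 M2; simpl in *.

Lemma char_ext0 al be : char_pair_ok al be -> ext (char_quad al be) (0,0).
Proof.
  intros (h1&h2&h3&h4). unfold char_quad. ext_tac 1 0 0 0.
  f_equal; nra.
Qed.

Lemma char_ext1 al be : char_pair_ok al be -> ext (char_quad al be) (1,0).
Proof.
  intros (h1&h2&h3&h4). unfold char_quad. ext_tac 0 1 0 0.
  assert (a1 = 1 /\ b1 = 1) by nra.
  f_equal; nra.
Qed.

Lemma char_ext2 al be : char_pair_ok al be -> ext (char_quad al be) (al, 1 - be).
Proof.
  intros (h1&h2&h3&h4). unfold char_quad. ext_tac 0 0 1 0.
  assert (a2 = 1 /\ b2 = 1) by nra.
  f_equal; nra.
Qed.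

Lemma char_ext3 al be : char_pair_ok al be -> ext (char_quad al be) (0,1).
Proof.
  intros (h1&h2&h3&h4). unfold char_quad. ext_tac 0 0 0 1.
  assert (a3 = 1 /\ b3 = 1) by nra.
  f_equal; nra.
Qed.

Lemma uniq al be al' be' : char_pair_ok al be -> char_pair_ok al' be' ->
  aff_equiv (char_quad al be) (char_quad al' be') -> al' = al /\ be' = be.
Proof.
  intros Hok Hok' (a&b&c&d&e&f&Hd&H).
  pose proof (ext_img a b c d e f _ _ _ Hd H (char_ext0 _ _ Hok)) as M0.
  pose proof (ext_img a b c d e f _ _ _ Hd H (char_ext1 _ _ Hok)) as M1.
  pose proof (ext_img a b c d e f _ _ _ Hd H (char_ext2 _ _ Hok)) as M2.
  pose proof (ext_img a b c d e f _ _ _ Hd H (char_ext3 _ _ Hok)) as M3.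
  unfold char_quad in M0, M1, M2, M3.
  apply ext_conv4 in M0; apply ext_conv4 in M1; apply ext_conv4 in M2; apply ext_conv4 in M3.
  destruct Hok as (h1&h2&h3&h4).
  assert (D01: aff_map a b c d e f (0,0) <> aff_map a b c d e f (1,0))
    by (intro E; apply aff_inj in E; auto; injection E; lra).
  assert (D02: aff_map a b c d e f (0,0) <> aff_map a b c d e f (al,1-be))
    by (intro E; apply aff_inj in E; auto; injection E; lra).
  assert (D03: aff_map a b c d e f (0,0) <> aff_map a b c d e f (0,1))
    by (intro E; apply aff_inj in E; auto; injection E; lra).
  assert (D12: aff_map a b c d e f (1,0) <> aff_map a b c d e f (al,1-be))
    by (intro E; apply aff_inj in E; auto; injection E; lra).
  assert (D13: aff_map a b c d e f (1,0) <> aff_map a b c d e f (0,1))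
    by (intro E; apply aff_inj in E; auto; injection E; lra).
  assert (D23: aff_map a b c d e f (al,1-be) <> aff_map a b c d e f (0,1))
    by (intro E; apply aff_inj in E; auto; injection E; lra).
  assert (R1: fst (aff_map a b c d e f (al,1-be)) = fst (aff_map a b c d e f (0,0))
     + al * (fst (aff_map a b c d e f (1,0)) - fst (aff_map a b c d e f (0,0)))
     + (1-be) * (fst (aff_map a b c d e f (0,1)) - fst (aff_map a b c d e f (0,0))))
    by (unfold aff_map; simpl; ring).
  assert (R2: snd (aff_map a b c d e f (al,1-be)) = snd (aff_map a b c d e f (0,0))
     + al * (snd (aff_map a b c d e f (1,0)) - snd (aff_map a b c d e f (0,0)))
     + (1-be) * (snd (aff_map a b c d e f (0,1)) - snd (aff_map a b c d e f (0,0))))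
    by (unfold aff_map; simpl; ring).
  clear H.
  generalize dependent (aff_map a b c d e f (0,0)).
  generalize dependent (aff_map a b c d e f (1,0)).
  generalize dependent (aff_map a b c d e f (al,1-be)).
  generalize dependent (aff_map a b c d e f (0,1)).
  intros q3 M3 q2 M2 ? ? ? ? ? ? ? ? ? ? ? ?.
  destruct Hok' as (k1&k2&k3&k4).
  repeat match goal with H : _ \/ _ |- _ => destruct H as [ -> | H ] end; subst;
  try (exfalso; match goal with Hn : ?u <> ?u |- _ => apply Hn; reflexivity end);
  simpl in *; split; nra.
Qed.

Lemma orth_conv al be z : 0 < be -> be < 1 -> 1 < al ->
  orthotoric al be z <-> conv4 (1,0) (1+be,be) (al+be,al*be) (al,0) z.
Proof.
  intros hb hb1 ha. split.
  - intros (x & y & [Hx1 Hx2] & [Hy1 Hy2] & ->).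
    set (u := (x-1)/(al-1)). set (w := y/be).
    assert (Hu: u*(al-1) = x-1) by (unfold u; field; lra).
    assert (Hw: w*be = y) by (unfold w; field; lra).
    clearbody u w.
    assert (Hu1: 0 <= u <= 1) by (split; nra).
    assert (Hw1: 0 <= w <= 1) by (split; nra).
    apply (conv4_intro _ _ _ _ _ ((1-u)*(1-w)) ((1-u)*w) (u*w) (u*(1-w))); simpl;
      try nra; try ring.
  - intros (l0&l1&l2&l3&H0&H1&H2&H3&Hs&Hx&Hy). simpl in Hx, Hy.
    destruct z as [P Rv]; simpl in *.
    assert (I1: 0 <= Rv).
    { rewrite Hy. assert (0 <= l1*be) by (apply Rmult_le_pos; lra).
      assert (0 <= l2*(al*be)) by (apply Rmult_le_pos; nra). nra. }
    assert (I2: al*(P-al) <= Rv).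
    { assert (al*(P-al) = l0*(al*(1-al)) + l1*(al*(1+be-al)) + l2*(al*be) + l3*0) by
        (rewrite Hx; replace l0 with (1-l1-l2-l3) by lra; ring).
      assert (al*(1-al) <= 0) by nra. assert (al*(1+be-al) <= be) by nra.
      assert (0 <= l0*(al*(al-1))) by (apply Rmult_le_pos; nra).
      assert (l1*(al*(1+be-al)) <= l1*be) by (apply Rmult_le_compat_l; lra).
      assert (Rv = l1*be + l2*(al*be)) by (rewrite Hy; ring). lra. }
    assert (I3: Rv <= be*(P-be)).
    { assert (be*(P-be) = l0*(be*(1-be)) + l1*be + l2*(be*al) + l3*(be*(al-be))) by
        (rewrite Hx; replace l0 with (1-l1-l2-l3) by lra; ring).
      assert (0 <= be*(1-be)) by nra. assert (0 <= be*(al-be)) by nra.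
      assert (0 <= l0*(be*(1-be))) by (apply Rmult_le_pos; lra).
      assert (0 <= l3*(be*(al-be))) by (apply Rmult_le_pos; lra).
      assert (Rv = l1*be + l2*(be*al)) by (rewrite Hy; ring). lra. }
    assert (I4: Rv <= P - 1).
    { assert (P - 1 = l0*0 + l1*be + l2*(al+be-1) + l3*(al-1)) by
        (rewrite Hx; replace l0 with (1-l1-l2-l3) by lra; ring).
      assert (al*be <= al+be-1) by nra.
      assert (l2*(al*be) <= l2*(al+be-1)) by (apply Rmult_le_compat_l; lra).
      assert (0 <= l3*(al-1)) by (apply Rmult_le_pos; lra).
      assert (Rv = l1*be + l2*(al*be)) by (rewrite Hy; ring). lra. }
    assert (HD: 0 <= P*P - 4*Rv) by (assert (0 <= (P-2*be)*(P-2*be)) by apply Rle_0_sqr; lra).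
    set (s := sqrt (P*P - 4*Rv)).
    assert (Hs0: 0 <= s) by apply sqrt_pos.
    assert (Hs2: s*s = P*P - 4*Rv) by (apply sqrt_sqrt; auto).
    set (x := (P+s)/2). set (y := (P-s)/2).
    clearbody s. 
    assert (F: forall t, (t-x)*(t-y) = t*t - P*t + Rv) by (intro; unfold x, y; nra).
    assert (Ex: x = (P+s)/2) by reflexivity. assert (Ey: y = (P-s)/2) by reflexivity.
    clearbody x y.
    assert (Fb := F be). assert (F1 := F 1). assert (F0 := F 0). assert (Fa := F al).
    assert (Hyx: y <= x) by (rewrite Ex, Ey; lra).
    assert (X1: 1 <= x) by nra.
    assert (Y1: y <= be) by nra.
    assert (Y0: 0 <= y) by nra.
    assert (X2: x <= al) by nra.
    exists x, y; split; [lra|split; [lra|]].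
    unfold Defs.sigma; simpl. rewrite Ex, Ey. f_equal; [field|nra].
Qed.

Lemma orth_equiv al be : 0 < be -> be < 1 -> 1 < al ->
  aff_equiv (char_quad al be) (orthotoric al be).
Proof.
  intros hb hb1 ha.
  exists be, (al-1), be, 0, 1, 0. split; [nra|].
  intro z. rewrite orth_conv by auto. unfold char_quad.
  apply conv4_aff; unfold aff_map; simpl; f_equal; ring.
Qed.

Ltac perm_ex l0 l1 l2 l3 :=
  first
  [ exists l0, l1, l2, l3; solve [repeat split; lra]
  | exists l0, l1, l3, l2; solve [repeat split; lra]
  | exists l0, l2, l1, l3; solve [repeat split; lra]
  | exists l0, l2, l3, l1; solve [repeat split; lra]
  | exists l0, l3, l1, l2; solve [repeat split; lra]
  | exists l0, l3, l2, l1; solve [repeat split; lra]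
  | exists l1, l0, l2, l3; solve [repeat split; lra]
  | exists l1, l0, l3, l2; solve [repeat split; lra]
  | exists l1, l2, l0, l3; solve [repeat split; lra]
  | exists l1, l2, l3, l0; solve [repeat split; lra]
  | exists l1, l3, l0, l2; solve [repeat split; lra]
  | exists l1, l3, l2, l0; solve [repeat split; lra]
  | exists l2, l0, l1, l3; solve [repeat split; lra]
  | exists l2, l0, l3, l1; solve [repeat split; lra]
  | exists l2, l1, l0, l3; solve [repeat split; lra]
  | exists l2, l1, l3, l0; solve [repeat split; lra]
  | exists l2, l3, l0, l1; solve [repeat split; lra]
  | exists l2, l3, l1, l0; solve [repeat split; lra]
  | exists l3, l0, l1, l2; solve [repeat split; lra]
  | exists l3, l0, l2, l1; solve [repeat split; lra]
  | exists l3, l1, l0, l2; solve [repeat split; lra]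
  | exists l3, l1, l2, l0; solve [repeat split; lra]
  | exists l3, l2, l0, l1; solve [repeat split; lra]
  | exists l3, l2, l1, l0; solve [repeat split; lra] ].

Ltac conv_perm :=
  intro x; unfold quad, vtx, conv4; simpl; split;
  intros (l0&l1&l2&l3&?&?&?&?&?&?&?); perm_ex l0 l1 l2 l3.

Ltac par_fin := split; [lia|split; [lia|split; [lia|]]];
  unfold vtx; simpl; unfold cross_dir in *; lra.

Ltac par_witness :=
  unfold has_parallel_edges;
  first [ exists 0%nat, 2%nat; par_fin | exists 1%nat, 3%nat; par_fin ].

Ltac try_lab p0 p1 p2 p3 :=
  let al := fresh "al" in let be := fresh "be" in
  let Hok := fresh "Hok" in let He := fresh "He" in
  let Hb := fresh "Hb" in let Ha := fresh "Ha" in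
  destruct (key p0 p1 p2 p3) as (al&be&Hok&He&Hb&Ha);
  [ unfold orient in *; first [left; repeat split; lra | right; repeat split; lra] |];
  exists al, be; split; [exact Hok|];
  split; [eapply aff_equiv_ext; [|exact He]; conv_perm|];
  let Hz := fresh "Hz" in split; intro Hz; [specialize (Hb Hz) | specialize (Ha Hz)]; par_witness.

Ltac all_labs v :=
  first [ try_lab (v 0%nat) (v 1%nat) (v 2%nat) (v 3%nat)
        | try_lab (v 1%nat) (v 2%nat) (v 3%nat) (v 0%nat)
        | try_lab (v 2%nat) (v 3%nat) (v 0%nat) (v 1%nat)
        | try_lab (v 3%nat) (v 0%nat) (v 1%nat) (v 2%nat)
        | try_lab (v 0%nat) (v 3%nat) (v 2%nat) (v 1%nat)
        | try_lab (v 1%nat) (v 0%nat) (v 3%nat) (v 2%nat)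
        | try_lab (v 2%nat) (v 1%nat) (v 0%nat) (v 3%nat)
        | try_lab (v 3%nat) (v 2%nat) (v 1%nat) (v 0%nat) ].

Lemma existence (v : nat -> pt) : convex_quad v ->
  exists al be, char_pair_ok al be /\ aff_equiv (quad v) (char_quad al be) /\
    (be = 0 -> has_parallel_edges v) /\ (al = 1 -> has_parallel_edges v).
Proof.
  intro Hv.
  assert (Hs : (0 < orient (v 3%nat) (v 0%nat) (v 1%nat) /\ 0 < orient (v 0%nat) (v 1%nat) (v 2%nat) /\
                0 < orient (v 1%nat) (v 2%nat) (v 3%nat) /\ 0 < orient (v 2%nat) (v 3%nat) (v 0%nat)) \/
               (orient (v 3%nat) (v 0%nat) (v 1%nat) < 0 /\ orient (v 0%nat) (v 1%nat) (v 2%nat) < 0 /\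
                orient (v 1%nat) (v 2%nat) (v 3%nat) < 0 /\ orient (v 2%nat) (v 3%nat) (v 0%nat) < 0)).
  { destruct Hv as [Hv|Hv]; [left|right];
    pose proof (Hv 0%nat ltac:(lia)); pose proof (Hv 1%nat ltac:(lia));
    pose proof (Hv 2%nat ltac:(lia)); pose proof (Hv 3%nat ltac:(lia));
    unfold vtx in *; simpl in *; tauto. }
  destruct Hs as [Hs|Hs]; clear Hv;
  destruct (Rle_dec (orient (v 3%nat) (v 0%nat) (v 1%nat)) (orient (v 1%nat) (v 2%nat) (v 3%nat)));
  destruct (Rle_dec (orient (v 0%nat) (v 1%nat) (v 2%nat)) (orient (v 2%nat) (v 3%nat) (v 0%nat)));
  destruct (Rle_dec (orient (v 0%nat) (v 1%nat) (v 2%nat)) (orient (v 3%nat) (v 0%nat) (v 1%nat)));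
  destruct (Rle_dec (orient (v 2%nat) (v 3%nat) (v 0%nat)) (orient (v 3%nat) (v 0%nat) (v 1%nat)));
  destruct (Rle_dec (orient (v 0%nat) (v 1%nat) (v 2%nat)) (orient (v 1%nat) (v 2%nat) (v 3%nat)));
  destruct (Rle_dec (orient (v 2%nat) (v 3%nat) (v 0%nat)) (orient (v 1%nat) (v 2%nat) (v 3%nat)));
  all_labs v.
Qed.

Theorem mainTheorem6 (v : nat -> pt) (Hv : convex_quad v) :
  (exists al be : R,
      (char_pair_ok al be /\ aff_equiv (quad v) (char_quad al be)) /\
      (forall al' be' : R,
          char_pair_ok al' be' /\ aff_equiv (quad v) (char_quad al' be') ->
          al' = al /\ be' = be)) /\
  (~ has_parallel_edges v ->
   forall al be : R,
     char_pair_ok al be -> aff_equiv (quad v) (char_quad al be) ->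
     0 < be /\ 1 < al /\ aff_equiv (quad v) (orthotoric al be)).
Proof.
  destruct (existence v Hv) as (al&be&Hok&He&Hb&Ha).
  assert (U: forall al' be', char_pair_ok al' be' /\ aff_equiv (quad v) (char_quad al' be') ->
             al' = al /\ be' = be).
  { intros al' be' [Hok' He']. apply uniq; auto.
    apply aff_equiv_trans with (quad v); auto. apply aff_equiv_sym; auto. }
  split.
  - exists al, be; split; auto.
  - intros Hnp al0 be0 Hok0 He0. destruct (U al0 be0 (conj Hok0 He0)) as [-> ->].
    pose proof Hok as (h1&h2&h3&h4).
    assert (Hbe: 0 < be).
    { destruct (Req_dec be 0) as [E|E]; [exfalso; apply Hnp; auto|lra]. }
    assert (Hal: 1 < al).
    { destruct (Req_dec al 1) as [E|E]; [exfalso; apply Hnp; auto|lra]. }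
    split; [auto|split; [auto|]].
    apply aff_equiv_trans with (char_quad al be); auto. apply orth_equiv; lra.
Qed.
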